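(* Let $p$ be an odd prime, $i\in\mathbb{N}_0$ and $\gamma\in\hat H_i$. Let $\tilde\gamma$ be the unique $\mathbb{Q}_p$-linear extension of $\gamma$ to $K\wedge_{\mathbb{Q}_p}K\to K$. Then for every $j\in\mathbb{N}_0$ with $j\equiv i\pmod{p-1}$, the restriction of $\tilde\gamma$ to $\mathfrak{p}^j\wedge\mathfrak{p}^j$ lies in $\hat H_j$.
   Context: Let $\theta$ be a primitive $p$-th root of unity, $K=\mathbb{Q}_p(\theta)$, $\mathcal{O}$ its ring of integers, $\mathfrak{p}$ its maximal ideal; $\mathfrak{p}^j$ is the unique ideal of index $p^j$ in $\mathcal{O}$. $P=\langle\theta\rangle$ acts by multiplication on ideals and diagonally on exterior squares $\mathfrak{p}^i\wedge\mathfrak{p}^i$ (over $\mathbb{Z}_p$); $\mathrm{Hom}_P$ denotes $P$-equivariant $\mathbb{Z}_p$-linear maps. $\hat{H}_i=\{\gamma\in\mathrm{Hom}_P(\mathfrak{p}^i\wedge\mathfrak{p}^i,\mathfrak{p}^{2i+1}) \mid \gamma \text{ surjective}\}$. *)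

(* Defs.v *)
From HB Require Import structures.
From mathcomp Require Import all_boot all_order all_algebra all_field.
Set Implicit Arguments. Unset Strict Implicit. Unset Printing Implicit Defensive.
Import GRing.Theory.
Local Open Scope ring_scope.

(* The p-adic integers, characterised axiomatically inside a field F:       *)
(* Zp is a valuation ring of F (so F = Frac Zp), its maximal ideal is       *)
(* generated by p, the residue field is the prime field F_p, Zp is          *)
(* p-adically separated and complete.  These properties characterise        *)
(* (Zp, F) up to isomorphism as (Z_p, Q_p).                                 *)
Definition is_padic_integers (p : nat) (F : fieldType) (Zp : {pred F}) : Prop :=
  let pF : F := p%:R in
  [/\ 1 \in Zp,
      (forall x y, x \in Zp -> y \in Zp -> (x - y \in Zp) /\ (x * y \in Zp)),
      (forall x : F, x \in Zp \/ x^-1 \in Zp),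
      pF \in Zp /\ pF^-1 \notin Zp
    & (forall x, x \in Zp -> x^-1 \notin Zp -> x / pF \in Zp)] /\
  [/\ (forall x, x \in Zp -> exists k : nat, (x - k%:R) / pF \in Zp),
      (forall x, (forall n, x / pF ^+ n \in Zp) -> x = 0)
    & (forall a : nat -> F, (forall n, a n \in Zp) ->
         (forall n, (a n.+1 - a n) / pF ^+ n \in Zp) ->
         exists l, forall n, (l - a n) / pF ^+ n \in Zp)].

Section Defs.
Variables (F : fieldType) (Zp : {pred F}) (L : fieldExtType F) (theta : L).

Definition ring_of_integers (x : L) : Prop :=
  exists q : {poly F}, [/\ q \is monic, (forall k, q`_k \in Zp)
                        & root (map_poly (fun a : F => a%:A) q) x].

(* the maximal ideal of the local ring O : its non-units *)
Definition max_ideal (x : L) : Prop :=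
  ring_of_integers x /\ ~ (exists y, ring_of_integers y /\ x * y = 1).

Fixpoint ideal_pow (j : nat) : L -> Prop :=
  match j with
  | 0 => ring_of_integers
  | j'.+1 => fun x => exists s : seq (L * L),
       (forall ab, ab \in s -> max_ideal ab.1 /\ ideal_pow j' ab.2) /\
       x = \sum_(ab <- s) ab.1 * ab.2
  end.

(* F-bilinear alternating maps L x L -> L, i.e. F-linear maps L ∧_F L -> L *)
Definition alt_bilinear (g : L -> L -> L) : Prop :=
  [/\ (forall (a : F) x y z, g (a *: x + y) z = a *: g x z + g y z),
      (forall (a : F) x y z, g x (a *: y + z) = a *: g x y + g x z)
    & (forall x, g x x = 0)].

(* The restriction of g to 𝔭^j ∧ 𝔭^j lies in \hat H_j :
   it maps into 𝔭^(2j+1), is P = <theta>-equivariant, and is surjective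
   onto 𝔭^(2j+1) (elements of 𝔭^j ∧ 𝔭^j are finite sums of x ∧ y). *)
Definition restr_in_Hhat (j : nat) (g : L -> L -> L) : Prop :=
  [/\ (forall x y, ideal_pow j x -> ideal_pow j y -> ideal_pow (2 * j + 1) (g x y)),
      (forall (k : nat) x y, ideal_pow j x -> ideal_pow j y ->
          g (theta ^+ k * x) (theta ^+ k * y) = theta ^+ k * g x y)
    & (forall z, ideal_pow (2 * j + 1) z ->
          exists s : seq (L * L),
            (forall ab, ab \in s -> ideal_pow j ab.1 /\ ideal_pow j ab.2) /\
            z = \sum_(ab <- s) g ab.1 ab.2)].
End Defs.

(* Main.v *)
Require Import Defs.
From HB Require Import structures.
From mathcomp Require Import all_boot all_order all_algebra all_field.
From mathcomp Require Import ring.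
From Stdlib Require Classical.
Set Implicit Arguments. Unset Strict Implicit. Unset Printing Implicit Defensive.
Import GRing.Theory.
Local Open Scope ring_scope.


Section Main.
Variables (p : nat) (F : fieldType) (Zp : {pred F}) (L : fieldExtType F) (theta : L).
Hypothesis p_prime : prime p.
Hypothesis hZp : is_padic_integers p Zp.
Hypothesis htheta : p.-primitive_root theta.
Hypothesis hK : <<1%VS; theta>>%VS = fullv.

Lemma Zp_subring : subring_closed Zp.
Proof.
case: hZp => -[Z1 ZBM _ _ _] _; split => // x y xZ yZ; by case: (ZBM x y xZ yZ).
Qed.

HB.instance Definition _ := GRing.isSubringClosed.Build F Zp Zp_subring.

Let c : F := p%:R.

Lemma Zp_disj x : x \in Zp \/ x^-1 \in Zp.
Proof. by case: hZp => -[_ _ h _ _] _; apply: h. Qed.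

Lemma c_Zp : c \in Zp. Proof. by case: hZp => -[_ _ _ []]. Qed.
Lemma cinv_Zp : c^-1 \notin Zp. Proof. by case: hZp => -[_ _ _ []]. Qed.
Lemma Zp_div x : x \in Zp -> x^-1 \notin Zp -> x / c \in Zp.
Proof. by case: hZp => -[_ _ _ _ h] _; apply: h. Qed.

Lemma c_neq0 : c != 0.
Proof. by apply/eqP=> c0; move: cinv_Zp; rewrite c0 invr0 rpred0. Qed.

Lemma Zp_unit x : x \in Zp -> x / c \notin Zp -> x^-1 \in Zp.
Proof. by move=> xZ xc; apply/negPn/negP => /(Zp_div xZ); apply/negP. Qed.

Local Notation ev := (horner_alg theta).
Definition Rs (x : L) : Prop := exists f : {poly F}, f \is a polyOver Zp /\ x = ev f.

Lemma RsC a : a \in Zp -> Rs a%:A.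
Proof. by move=> aZ; exists a%:P; rewrite polyOverC horner_algC. Qed.
Lemma Rs1 : Rs 1. Proof. by rewrite -(scale1r 1); apply: RsC; rewrite rpred1. Qed.
Lemma Rs0 : Rs 0. Proof. by rewrite -(scale0r 1); apply: RsC; rewrite rpred0. Qed.
Lemma Rs_theta : Rs theta.
Proof. by exists 'X; rewrite polyOverX horner_algX. Qed.
Lemma RsD x y : Rs x -> Rs y -> Rs (x + y).
Proof. by move=> [f [fZ ->]] [g [gZ ->]]; exists (f + g); rewrite rpredD // rmorphD. Qed.
Lemma RsB x y : Rs x -> Rs y -> Rs (x - y).
Proof. by move=> [f [fZ ->]] [g [gZ ->]]; exists (f - g); rewrite rpredB // rmorphB. Qed.
Lemma RsM x y : Rs x -> Rs y -> Rs (x * y).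
Proof. by move=> [f [fZ ->]] [g [gZ ->]]; exists (f * g); rewrite rpredM // rmorphM. Qed.
Lemma RsN x : Rs x -> Rs (- x).
Proof. by move=> h; rewrite -sub0r; apply: RsB => //; apply: Rs0. Qed.
Lemma RsX x n : Rs x -> Rs (x ^+ n).
Proof. by move=> h; elim: n => [|n IH]; [rewrite expr0; apply: Rs1 | rewrite exprS; apply: RsM]. Qed.
Lemma Rs_nat n : Rs n%:R.
Proof. by elim: n => [|n IH]; [apply: Rs0 | rewrite -addn1 natrD; apply: RsD => //; apply: Rs1]. Qed.
Lemma Rs_sum (I : Type) (r : seq I) (P : pred I) (E : I -> L) :
  (forall i, P i -> Rs (E i)) -> Rs (\sum_(i <- r | P i) E i).
Proof.
move=> h; elim: r => [|a r IH]; first by rewrite big_nil; apply: Rs0.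
rewrite big_cons.
by case: ifP => // Pa; apply: RsD => //; apply: h.
Qed.
Lemma Rs_prod (I : Type) (r : seq I) (P : pred I) (E : I -> L) :
  (forall i, P i -> Rs (E i)) -> Rs (\prod_(i <- r | P i) E i).
Proof.
move=> h; elim: r => [|a r IH]; first by rewrite big_nil; apply: Rs1.
rewrite big_cons.
by case: ifP => // Pa; apply: RsM => //; apply: h.
Qed.
Lemma RsZ a x : a \in Zp -> Rs x -> Rs (a *: x).
Proof. by move=> aZ hx; rewrite -mulr_algl; apply: RsM => //; apply: RsC. Qed.

Definition pi : L := 1 - theta.
Lemma Rs_pi : Rs pi. Proof. exact: RsB Rs1 Rs_theta. Qed.

Lemma p_gt1 : (1 < p)%N. Proof. exact: prime_gt1. Qed.
Lemma theta_p : theta ^+ p = 1. Proof. exact: prim_expr_order htheta. Qed.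

Lemma prod_formula : \prod_(1 <= k < p) (1 - theta ^+ k) = p%:R.
Proof.
have h : \prod_(1 <= i < p) ('X - (theta ^+ i)%:P) = \sum_(i < p) 'X^i.
  have := factor_Xn_sub_1 htheta.
  rewrite big_ltn ?(ltnW p_gt1) // expr0 subrX1.
  exact: (mulfI (negbT (polyXsubC_eq0 1))).
have := congr1 (fun q => q.[1]) h; rewrite /= horner_prod horner_sum.
under eq_bigr do rewrite hornerXsubC.
move=> ->.
under eq_bigr do rewrite hornerXn expr1n.
by rewrite sumr_const card_ord.
Qed.

Lemma one_subX (x : L) n : 1 - x ^+ n = (1 - x) * \sum_(i < n) x ^+ i.
Proof. by rewrite -opprB subrX1 -mulNr opprB. Qed.

Lemma pi_fact k : (0 < k < p)%N -> exists u, Rs u /\ pi = (1 - theta ^+ k) * u.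
Proof.
case/andP=> k0 kp.
have cop : coprime k p by rewrite coprime_sym prime_coprime // gtnNdvd.
have pr : p.-primitive_root (theta ^+ k) by rewrite prim_root_exp_coprime.
have [i hi] := prim_rootP pr theta_p.
exists (\sum_(j < i) (theta ^+ k) ^+ j); split.
  apply: Rs_sum => j _. apply: RsX. apply: RsX. apply: Rs_theta.
by rewrite /pi {1}hi (one_subX (theta ^+ k) i).
Qed.

Lemma W_ex : exists W, Rs W /\ p%:R = pi ^+ p.-1 * W.
Proof.
exists (\prod_(1 <= k < p) \sum_(i < k) theta ^+ i); split.
  by apply: Rs_prod => k _; apply: Rs_sum => i _; apply: RsX; apply: Rs_theta.
rewrite -prod_formula (eq_bigr _ (fun k _ => one_subX theta k)) big_split /=.
by rewrite prodr_const_nat subn1.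
Qed.

Lemma U_ex : exists U, Rs U /\ pi ^+ p.-1 = p%:R * U.
Proof.
suff: forall n, (n <= p)%N -> exists U, Rs U /\ pi ^+ n.-1 = \prod_(1 <= k < n) (1 - theta ^+ k) * U.
  by move/(_ p (leqnn p)); rewrite prod_formula.
elim=> [|n IH] np.
  by exists 1; split; [apply: Rs1 | rewrite big_geq // !mul1r].
case: n IH np => [|n] IH np.
  by exists 1; split; [apply: Rs1 | rewrite big_geq // !mul1r].
have [U [RU hU]] := IH (ltnW np).
have [u [Ru hu]] := pi_fact (k := n.+1) np.
exists (U * u); split; first exact: RsM.
by rewrite big_nat_recr //= exprS /= hU {1}hu; rewrite mulrC; rewrite !mulrA; congr (_ * _); rewrite -!mulrA; congr (_ * _); rewrite mulrC.
Qed.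
Lemma det_mxOver n (B : 'M[{poly F}]_n) :
  B \is a mxOver (polyOver Zp) -> \det B \is a polyOver Zp.
Proof.
move/mxOverP=> hB; rewrite /determinant.
apply: rpred_sum => s _; apply: rpredM; first by rewrite rpredX // rpredN rpred1.
by apply: rpred_prod => i _; apply: hB.
Qed.

Lemma det_trick m (M : 'M[F]_m.+1) (v : 'cV[L]_m.+1) (x : L) :
  M \is a mxOver Zp -> v ord0 0 = 1 -> map_mx (in_alg L) M *m v = x *: v ->
  ring_of_integers Zp x.
Proof.
move=> /mxOverP MZ v0 hMv.
set A := x%:M - map_mx (in_alg L) M.
have Av : A *m v = 0 by rewrite mulmxBl mul_scalar_mx hMv subrr.
have dA : \det A = 0.
  have := congr1 (mulmx (\adj A)) Av.
  rewrite mulmxA mul_adj_mx mulmx0 mul_scalar_mx => /matrixP /(_ ord0 0).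
  by rewrite !mxE v0 mulr1.
exists (char_poly M); split.
- exact: char_poly_monic.
- apply/polyOverP; apply: det_mxOver; apply/mxOverP => i j.
  rewrite !mxE; apply: rpredB; first by apply: rpredMn; apply: polyOverX.
  by rewrite polyOverC.
- rewrite /root.
  change (horner_alg x (char_poly M) == 0).
  rewrite /char_poly -det_map_mx -[X in \det X == _]/(map_mx (horner_alg x) (char_poly_mx M)).
  suff -> : map_mx (horner_alg x) (char_poly_mx M) = A by rewrite dA.
  apply/matrixP => i j; rewrite !mxE rmorphB rmorphMn /= horner_algX horner_algC.
  by [].
Qed.
Lemma Rs_int_aux m (f : {poly F}) : theta ^+ m.+1 = 1 -> f \is a polyOver Zp ->
  ring_of_integers Zp (horner_alg theta f).
Proof.
move=> thm fZ.
pose P : 'M[F]_m.+1 := \matrix_(i, j) (j == ordS i)%:R.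
pose v : 'cV[L]_m.+1 := \col_i theta ^+ i.
have Pv : map_mx (in_alg L) P *m v = theta *: v.
  apply/matrixP => i k; rewrite !mxE.
  rewrite (bigD1 (ordS i)) //= big1 => [|j /negbTE hj]; last by rewrite !mxE hj rmorph0 mul0r.
  by rewrite !mxE eqxx rmorph1 mul1r addr0 expr_mod // exprS.
have Mv : forall g : {poly F}, map_mx (in_alg L) (horner_mx P g) *m v = horner_alg theta g *: v.
  elim/poly_ind => [|g a IH]; first by rewrite !rmorph0 scale0r; apply/matrixP => i j; rewrite !mxE big1 // => k _; rewrite !mxE mul0r.
  rewrite rmorphD rmorphM /= horner_mx_X horner_mx_C map_mxD map_mxM mulmxDl -mulmxA Pv.
  rewrite -scalemxAr IH map_scalar_mx mul_scalar_mx rmorphD rmorphM /= horner_algX horner_algC.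
  by rewrite scalerA scalerDl mulrC.
apply: (det_trick (v := v)) (Mv f).
- rewrite -[f]coefK poly_def rmorph_sum /=; apply: rpred_sum => i _.
  rewrite linearZ /= rmorphXn /= horner_mx_X; apply: mxOverZ; first exact: (polyOverP fZ).
  apply: rpredX; apply/mxOverP => a b; rewrite mxE; by case: (_ == _); rewrite ?rpred0 ?rpred1.
- by rewrite mxE expr0.
Qed.

Lemma Rs_int x : Rs x -> ring_of_integers Zp x.
Proof.
move=> [f [fZ ->]]; apply: (Rs_int_aux (m := p.-1)) fZ.
by rewrite prednK ?prime_gt0 // theta_p.
Qed.
Lemma inv_trick (R : comPzRingType) (b : nat -> R) d (x w : R) :
  \sum_(k < d) b k * x ^+ k + x ^+ d = 0 -> x * w = 1 ->
  1 = w * - \sum_(k < d) b k * w ^+ (d.-1 - k).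
Proof.
move=> h xw.
have E : \sum_(k < d) b k * x ^+ k * w ^+ d = - 1.
  have := congr1 (fun z => z * w ^+ d) h; rewrite mul0r mulrDl -exprMn xw expr1n.
  by rewrite mulr_suml => /eqP; rewrite addr_eq0 => /eqP.
rewrite mulrN mulr_sumr -[1]opprK -E; congr (- _).
have aux : forall k : nat, (k < d)%N -> x ^+ k * w ^+ d = w * w ^+ (d.-1 - k).
  move=> k kd; rewrite -{1}(subnKC (ltnW kd)) exprD mulrA -exprMn xw expr1n mul1r -exprS.
  by congr (_ ^+ _); case: d kd {h E} => // d' kd; rewrite /= subSn.
apply: eq_bigr => k _; have kd := ltn_ord k.
by rewrite -mulrA aux // mulrCA.
Qed.

Lemma int_eq (x : L) : ring_of_integers Zp x ->
  exists d (b : nat -> F), (forall k, b k \in Zp) /\ \sum_(k < d) b k *: x ^+ k + x ^+ d = 0.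
Proof.
move=> [q [qm qZ qr]]; exists (size q).-1, (fun k => q`_k); split => //.
have : horner_alg x q = 0 by apply/eqP; exact: qr.
rewrite -[q in horner_alg x q]coefK poly_def rmorph_sum /=.
have sq : size q = (size q).-1.+1 by rewrite prednK // lt0n size_poly_eq0 monic_neq0.
rewrite sq big_ord_recr /= -/(lead_coef q) (monicP qm) linearZ /= rmorphXn /= horner_algX scale1r.
move=> e; apply: etrans e; rewrite mul1r; congr (_ + _); apply: eq_bigr => i _.
by rewrite linearZ /= rmorphXn /= horner_algX mulr_algl.
Qed.
Lemma Fint (a : F) : ring_of_integers Zp (a%:A : L) -> a \in Zp.
Proof.
move=> /int_eq [d [b [bZ hb]]].
have hF : \sum_(k < d) b k * a ^+ k + a ^+ d = 0.
  have inj : forall y : F, y%:A = 0 :> L -> y = 0.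
    by move=> y /eqP; rewrite scaler_eq0 oner_eq0 orbF => /eqP.
  apply: inj.
  rewrite -[RHS]hb scalerDl scaler_suml exprZn expr1n; congr (_ + _).
  by apply: eq_bigr => k _; rewrite exprZn expr1n scalerA.
case: (boolP (a \in Zp)) => // aZ; exfalso.
have aiZ : a^-1 \in Zp by case: (Zp_disj a) => //; rewrite (negbTE aZ).
have a0 : a != 0 by apply: contraNneq aZ => ->; rewrite rpred0.
have := inv_trick hF (mulfV a0) => e.
move: aZ; rewrite -[a]mulr1 e mulrA mulfV // mul1r rpredN.
by rewrite rpred_sum // => k _; rewrite rpredM ?rpredX.
Qed.

Lemma cL : (c%:A : L) = p%:R.
Proof. by rewrite /c -in_algE rmorph_nat. Qed.

Lemma piinv_false r : Rs r -> pi * r = 1 -> False.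
Proof.
move=> Rr pr.
have [U [RU hU]] := U_ex.
have h1 : p%:R * (U * r ^+ p.-1) = 1 by rewrite mulrA -hU -exprMn pr expr1n.
have : Rs (c^-1)%:A.
  suff -> : (c^-1)%:A = U * r ^+ p.-1 :> L by apply: RsM => //; apply: RsX.
  have h2 : c%:A * (U * r ^+ p.-1) = 1 by rewrite cL.
  by rewrite -[LHS]mulr1 -{2}h2 !mulr_algl scalerA mulVf ?c_neq0 // scale1r.
by move/Rs_int/Fint; apply/negP; apply: cinv_Zp.
Qed.
Fixpoint rr (Y : L) (k : nat) : L :=
  if k is k'.+1 then (-1) ^+ k' + (Y - 1) * rr Y k' else 0.

Lemma rrE Y k : (Y - 1) ^+ k = (-1) ^+ k + Y * rr Y k.
Proof.
elim: k => [|k IH] /=; first by rewrite !expr0 mulr0 addr0.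
rewrite exprS IH !exprS; ring.
Qed.

Lemma Rs_rr Y k : Rs Y -> Rs (rr Y k).
Proof.
move=> RY; elim: k => [|k IH] /=; first exact: Rs0.
apply: RsD; first by apply: RsX; apply: RsN; apply: Rs1.
by apply: RsM => //; apply: RsB => //; apply: Rs1.
Qed.
Lemma unit_1pt t : Rs t -> exists z, Rs z /\ (1 + c *: t) * z = 1.
Proof.
move=> Rt; have [d [b [bZ hb]]] := int_eq (Rs_int Rt).
set Y := 1 + c *: t.
have RY : Rs Y by apply: RsD; [apply: Rs1 | apply: RsZ => //; apply: c_Zp].
have Yc : Y - 1 = c *: t by rewrite /Y addrAC subrr add0r.
pose beta k : F := b k * c ^+ (d - k).
pose e : F := \sum_(k < d) beta k * (-1) ^+ k + (-1) ^+ d.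
pose R' := \sum_(k < d) beta k *: rr Y k + rr Y d.
have key : e%:A + Y * R' = 0.
  rewrite -[RHS](scaler0 _ (c ^+ d)) -{1}hb scalerDr scaler_sumr -exprZn -Yc rrE.
  have E1 : forall k : 'I_d, c ^+ d *: (b k *: t ^+ k) =
      in_alg L (beta k * (-1) ^+ k) + Y * (beta k *: rr Y k).
    move=> k; rewrite rmorphM rmorphXn rmorphN1 /= mulr_algl -scalerAr -scalerDr.
    rewrite -rrE Yc exprZn !scalerA; congr (_ *: _).
    by rewrite /beta -mulrA -exprD subnK ?(ltnW (ltn_ord k)) // mulrC.
  rewrite (eq_bigr _ (fun k _ => E1 k)) big_split /= /e /R' -in_algE rmorphD rmorph_sum /=.
  rewrite mulrDr mulr_sumr addrACA -[((-1) ^+ d)%:A]in_algE rmorphXn rmorphN1.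
  by [].
have e_unit : e / c \notin Zp.
  apply/negP => ec.
  pose z' : F := \sum_(k < d) b k * c ^+ (d - k).-1 * (-1) ^+ k.
  have z'Z : z' \in Zp.
    by apply: rpred_sum => k _; rewrite !rpredM ?rpredX ?rpredN ?rpred1 ?c_Zp.
  have ez : e = c * z' + (-1) ^+ d.
    rewrite /e /z' mulr_sumr; congr (_ + _); apply: eq_bigr => k _.
    have hk : c ^+ (d - k) = c * c ^+ (d - k).-1 by rewrite -exprS prednK // subn_gt0.
    by rewrite /beta hk; ring.
  move: cinv_Zp; apply/negP; apply/negPn.
  have : e / c - z' \in Zp by rewrite rpredB.
  rewrite ez mulrDl mulrAC divff ?c_neq0 // mul1r addrAC subrr add0r => h.
  have -> : c^-1 = (-1) ^+ d * ((-1) ^+ d / c) by rewrite signrMK.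
  by rewrite rpredM ?rpredX ?rpredN ?rpred1.
have eZ : e \in Zp.
  by rewrite rpredD ?rpred_sum // => [k _|]; rewrite ?rpredM ?rpredX ?rpredN ?rpred1 ?c_Zp.
have ei : e^-1 \in Zp by apply: Zp_unit.
have e0 : e != 0 by apply: contraNneq e_unit => ->; rewrite mul0r rpred0.
exists (- (e^-1 *: R')); split.
  apply: RsN; apply: RsZ => //; apply: RsD; last exact: Rs_rr.
  by apply: Rs_sum => k _; apply: RsZ; [rewrite rpredM ?rpredX ?c_Zp | exact: Rs_rr].
have YR : Y * R' = - e%:A by apply/eqP; rewrite -addr_eq0 addrC key.
rewrite mulrN -scalerAr YR scalerN opprK.
by rewrite scalerA mulVf // scale1r.
Qed.
Lemma binom_p (a s : L) : Rs s -> a = pi * s -> exists t, Rs t /\ (1 + a) ^+ p = 1 + c *: t.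
Proof.
move=> Rs_s ha; have [U [RU hU]] := U_ex.
pose T (i : nat) := if (i.+1 < p)%N then a ^+ i.+1 *+ ('C(p, i.+1) %/ p) else pi * U * s ^+ p.
have Ra : Rs a by rewrite ha; apply: RsM => //; apply: Rs_pi.
exists (\sum_(i < p) T i); split.
  apply: Rs_sum => i _; rewrite /T; case: ifP => _.
    by rewrite -scaler_nat; apply: RsZ; [apply: rpred_nat | apply: RsX].
  by apply: RsM; [apply: RsM; [apply: Rs_pi|]| apply: RsX].
rewrite addrC exprD1n big_ord_recl /= expr0 bin0 mulr1n; congr (_ + _).
rewrite scaler_sumr; apply: eq_bigr => i _; rewrite /T /bump /=.
case: ifP => hi.
  have dv : (p %| 'C(p, i.+1))%N by apply: prime_dvd_bin.
  by rewrite -{1}(divnK dv) mulrnA scaler_nat.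
have ip : i.+1 = p by apply/eqP; rewrite eqn_leq ltn_ord leqNgt hi.
have ie : (i : nat) = p.-1 by rewrite -[in RHS]ip.
rewrite add1n ip binn mulr1n ha exprMn -{1}ip exprS ie.
by rewrite hU -(mulr_algl c (pi * U * s ^+ p)) cL; ring.
Qed.
Lemma ev_expand (f : {poly F}) : horner_alg theta f = \sum_(i < size f) f`_i *: theta ^+ i.
Proof.
rewrite -[f in LHS]coefK poly_def rmorph_sum /=; apply: eq_bigr => i _.
by rewrite linearZ /= rmorphXn /= horner_algX mulr_algl.
Qed.

Lemma unit_crit u : Rs u -> ~ (exists r, Rs r /\ u = pi * r) ->
  exists y, Rs y /\ u * y = 1.
Proof.
move=> [f [fZ ->]] npi.
have [W [RW hW]] := W_ex.
pose c0 := \sum_(i < size f) f`_i.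
have c0Z : c0 \in Zp by apply: rpred_sum => i _; exact: (polyOverP fZ).
pose s' := - \sum_(i < size f) f`_i *: \sum_(j < i) theta ^+ j.
have Rs' : Rs s'.
  apply: RsN; apply: Rs_sum => i _; apply: RsZ; first exact: (polyOverP fZ).
  by apply: Rs_sum => j _; apply: RsX; apply: Rs_theta.
have hs' : horner_alg theta f = c0%:A + pi * s'.
  rewrite ev_expand /s' /c0 scaler_suml mulrN mulr_sumr -sumrB; apply: eq_bigr => i _.
  rewrite -scalerAr -scalerBr; congr (_ *: _).
  by rewrite /pi -one_subX opprB addrCA subrr addr0.
have nc : c0 / c \notin Zp.
  apply/negP => h; apply: npi.
  have p1 : p.-1 = (p.-1).-1.+1 by rewrite prednK // -ltnS prednK ?prime_gt0 // p_gt1.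
  exists ((c0 / c) *: (pi ^+ (p.-1).-1 * W) + s'); split.
    apply: RsD => //; apply: RsZ => //; apply: RsM => //; apply: RsX; apply: Rs_pi.
  rewrite hs' mulrDr; congr (_ + _).
  rewrite -scalerAr mulrA -exprS -p1 -hW -cL -[c0 in LHS](divfK c_neq0).
  by rewrite -scalerA.
have c0i : c0^-1 \in Zp by apply: Zp_unit.
have c00 : c0 != 0 by apply: contraNneq nc => ->; rewrite mul0r rpred0.
pose s := c0^-1 *: s'.
have Rs_s : Rs s by apply: RsZ.
have [t [Rt ht]] := binom_p Rs_s (erefl (pi * s)).
have [z [Rz hz]] := unit_1pt Rt.
exists (c0^-1 *: ((1 + pi * s) ^+ p.-1 * z)); split.
  apply: RsZ => //; apply: RsM => //; apply: RsX; apply: RsD; first exact: Rs1.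
  by apply: RsM => //; apply: Rs_pi.
have ua : c0%:A + pi * s' = c0%:A * (1 + pi * s).
  by rewrite mulrDr mulr1 /s -scalerAr mulr_algl scalerA divff // scale1r.
rewrite hs' ua -scalerAr -mulrA mulr_algl scalerA mulVf // scale1r.
by rewrite mulrA -exprS prednK ?prime_gt0 // ht.
Qed.
Lemma F_bound (a : F) : exists N, c ^+ N * a \in Zp.
Proof.
have [|] := Zp_disj a; first by exists 0%N; rewrite expr0 mul1r.
move=> aiZ.
case: (eqVneq a 0) => [->|a0]; first by exists 0%N; rewrite mulr0 rpred0.
have sep : ~ (forall n, a^-1 / c ^+ n \in Zp).
  move=> h; case: hZp => _ [_ hsep _].
  by move: (hsep _ h) => /eqP; rewrite invr_eq0 (negbTE a0).
have : exists n, a^-1 / c ^+ n \notin Zp.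
  by apply: Classical_Prop.NNPP => hn; apply: sep => n; apply: Classical_Prop.NNPP => hn2; apply: hn; exists n; apply/negP.
move=> ex; pose n := ex_minn ex.
have [hn hmin] : a^-1 / c ^+ n \notin Zp /\ forall k, a^-1 / c ^+ k \notin Zp -> (n <= k)%N.
  by rewrite /n; case: (ex_minnP ex) => m hm hmin'; split.
have n0 : n != 0%N.
  by apply/eqP => e; move: hn; rewrite e expr0 divr1 aiZ.
have bZ : a^-1 / c ^+ n.-1 \in Zp.
  apply/negPn/negP => h; have := hmin _ h; rewrite -ltnS prednK ?lt0n // ltnn //.
have : (a^-1 / c ^+ n.-1)^-1 \in Zp.
  apply: Zp_unit => //; rewrite -mulrA -invfM -exprSr prednK ?lt0n //.
move=> h; exists n.-1; move: h; rewrite invfM invrK mulrC.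
by rewrite invrK.
Qed.
Lemma scale_Rs (x : L) : exists N, Rs (c ^+ N *: x).
Proof.
have : x \in <<1%VS; theta>>%VS by rewrite hK memvf.
case/Fadjoin_polyP => g /polyOver1P [g' ->] ->.
have bnd : forall n, exists N, forall i, (i < n)%N -> c ^+ N * g'`_i \in Zp.
  elim=> [|n [N hN]]; first by exists 0%N.
  have [M hM] := F_bound g'`_n.
  exists (N + M)%N => i; rewrite ltnS leq_eqVlt => /orP [/eqP ->|hi].
    by rewrite exprD -mulrA rpredM ?rpredX ?c_Zp.
  by rewrite addnC exprD -mulrA rpredM ?rpredX ?c_Zp ?hN.
have [N hN] := bnd (size g').
exists N; exists (c ^+ N *: g'); split.
  apply/polyOverP => i; rewrite coefZ; case: (ltnP i (size g')) => hi; first exact: hN.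
  by rewrite nth_default // mulr0 rpred0.
by rewrite linearZ /= mulr_algl.
Qed.
Lemma pi_neq0 : pi != 0.
Proof.
apply/eqP => /eqP; rewrite /pi subr_eq0 eq_sym => h.
have := prim_order_dvd htheta 1; rewrite expr1 h dvdn1 => /eqP p1.
by move: p_gt1; rewrite p1.
Qed.

Lemma int_unit_false (x w : L) : ring_of_integers Zp x -> x * w = 1 ->
  (exists r, Rs r /\ w = pi * r) -> False.
Proof.
move=> /int_eq [d [b [bZ hb]]] xw [r [Rr hr]].
have hb' : \sum_(k < d) (b k)%:A * x ^+ k + x ^+ d = 0.
  by rewrite -[RHS]hb; congr (_ + _); apply: eq_bigr => k _; rewrite mulr_algl.
have := @inv_trick _ (fun k => (b k)%:A) _ _ _ hb' xw; rewrite hr -mulrA => h.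
apply: (piinv_false (r := r * - \sum_(k < d) (b k)%:A * (pi * r) ^+ (d.-1 - k))) => //.
apply: RsM => //; apply: RsN; apply: Rs_sum => k _; apply: RsM; first exact: RsC.
by apply: RsX; apply: RsM => //; apply: Rs_pi.
Qed.

Lemma Rs_of_int x : ring_of_integers Zp x -> Rs x.
Proof.
move=> xO.
suff H : forall m, Rs (pi ^+ m * x) -> Rs x.
  have [N hN] := scale_Rs x; have [U [RU hU]] := U_ex.
  apply: (H (p.-1 * N)%N).
  have -> : pi ^+ (p.-1 * N) * x = U ^+ N * (c ^+ N *: x).
    rewrite exprM hU -cL exprMn -(mulr_algl (c ^+ N) x) exprZn expr1n.
    set q := (c ^+ N *: 1 : L); ring.
  by apply: RsM => //; apply: RsX.
elim=> [|m IH]; first by rewrite expr0 mul1r.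
move=> hm; case: (Classical_Prop.classic (exists r, Rs r /\ pi ^+ m.+1 * x = pi * r)).
  move=> [r [Rr hr]]; apply: IH; suff -> : pi ^+ m * x = r by [].
  by apply: (mulfI pi_neq0); rewrite mulrA -exprS.
move=> hn; have [v' [Rv hv]] := unit_crit hm hn; exfalso.
apply: (int_unit_false (w := pi ^+ m.+1 * v') xO).
  by rewrite mulrA [x * _]mulrC hv.
exists (pi ^+ m * v'); split; first by apply: RsM => //; apply: RsX; apply: Rs_pi.
by rewrite exprS mulrA.
Qed.
Definition PR n (z : L) := exists r, Rs r /\ z = pi ^+ n * r.

Lemma max_iff x : max_ideal Zp x <-> PR 1 x.
Proof.
split.
  move=> [/Rs_of_int Rx nu].
  case: (Classical_Prop.classic (exists r, Rs r /\ x = pi * r)) => [[r [Rr hr]]|hn].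
    by exists r; rewrite expr1.
  have [y [Ry hy]] := unit_crit Rx hn.
  by exfalso; apply: nu; exists y; split => //; apply: Rs_int.
move=> [r [Rr ->]]; rewrite expr1; split.
  by apply: Rs_int; apply: RsM => //; apply: Rs_pi.
move=> [y [/Rs_of_int Ry hy]]; apply: (piinv_false (r := r * y)); first exact: RsM.
by rewrite mulrA.
Qed.

Lemma ideal_iff n x : ideal_pow Zp n x <-> PR n x.
Proof.
elim: n x => [|n IH] x /=.
  split; first by move/Rs_of_int => Rx; exists x; rewrite expr0 mul1r.
  by move=> [r [Rr ->]]; rewrite expr0 mul1r; apply: Rs_int.
split.
  move=> [s [hs ->]]; elim: s hs => [|ab s IHs] hs.
    by exists 0; split; [apply: Rs0 | rewrite big_nil mulr0].
  have [r [Rr hr]] := IHs (fun ab' h => hs ab' (ltac:(by rewrite in_cons h orbT))).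
  have [/max_iff [r1 [Rr1 h1]] /IH [r2 [Rr2 h2]]] := hs ab (mem_head ab s).
  exists (r1 * r2 + r); split; first by apply: RsD => //; apply: RsM.
  by rewrite big_cons hr h1 h2 mulrDr !exprS expr0; congr (_ + _); ring.
move=> [r [Rr ->]]; exists [:: (pi, pi ^+ n * r)]; split.
  move=> ab; rewrite mem_seq1 => /eqP -> /=; split.
    by apply/max_iff; exists 1; split; [apply: Rs1 | rewrite expr1 mulr1].
  by apply/IH; exists r.
by rewrite big_seq1 /= exprS mulrA.
Qed.

Lemma PR_shift k z : PR (k + p.-1) z <-> PR k (c^-1 *: z).
Proof.
have [U [RU hU]] := U_ex; have [W [RW hW]] := W_ex.
have cc : c^-1 *: (p%:R : L) = 1 by rewrite -cL scalerA mulVf ?c_neq0 // scale1r.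
split.
  move=> [r [Rr ->]]; exists (U * r); split; first exact: RsM.
  rewrite exprD hU -(mulr_algl (c^-1)) -cL.
  have e : (c^-1)%:A * c%:A = 1 :> L by rewrite mulr_algl scalerA mulVf ?c_neq0 // scale1r.
  set a1 := (c^-1)%:A in e *; set a2 := c%:A in e *.
  by rewrite -[RHS]mul1r -e; ring.
move=> [r [Rr hr]]; exists (W * r); split; first exact: RsM.
have -> : z = c *: (c^-1 *: z) by rewrite scalerA divff ?c_neq0 // scale1r.
rewrite hr exprD -(mulr_algl c) cL hW; ring.
Qed.

Lemma ideal_shift m k (z : L) :
  ideal_pow Zp (k + m * p.-1) z <-> ideal_pow Zp k ((c^-1) ^+ m *: z).
Proof.
elim: m k z => [|m IH] k z; first by rewrite mul0n addn0 expr0 scale1r.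
rewrite mulSnr addnA ideal_iff PR_shift -ideal_iff IH.
by rewrite scalerA -exprSr.
Qed.
Lemma transfer (i j : nat) (a : F) (g : L -> L -> L) : a != 0 ->
  (forall x : L, ideal_pow Zp j x <-> ideal_pow Zp i (a *: x)) ->
  (forall z : L, ideal_pow Zp (2 * j + 1) z <-> ideal_pow Zp (2 * i + 1) (a ^+ 2 *: z)) ->
  alt_bilinear g -> restr_in_Hhat Zp theta i g -> restr_in_Hhat Zp theta j g.
Proof.
move=> a0 E1 E2 [hl hr hd] [h1 h2 h3].
have g0l : forall z, g 0 z = 0.
  move=> z; have := hl 1 0 0 z; rewrite scaler0 addr0 scale1r => e.
  by apply/esym/(addrI (g 0 z)); rewrite addr0 -e.
have g0r : forall z, g z 0 = 0.
  move=> z; have := hr 1 z 0 0; rewrite scaler0 addr0 scale1r => e.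
  by apply/esym/(addrI (g z 0)); rewrite addr0 -e.
have gZl : forall b x y, g (b *: x) y = b *: g x y.
  by move=> b x y; rewrite -[b *: x]addr0 hl g0l addr0.
have gZr : forall b x y, g x (b *: y) = b *: g x y.
  by move=> b x y; rewrite -[b *: y]addr0 hr g0r addr0.
have gaa : forall b x y, g (b *: x) (b *: y) = b ^+ 2 *: g x y.
  by move=> b x y; rewrite gZl gZr scalerA expr2.
have a20 : a ^+ 2 != 0 by rewrite expf_neq0.
split.
- move=> x y /E1 hx /E1 hy; apply/E2; rewrite -gaa; exact: h1.
- move=> k x y /E1 hx /E1 hy; apply: (scalerI a20).
  by rewrite -gaa (scalerAr a (theta ^+ k) x) (scalerAr a (theta ^+ k) y) h2 // gaa scalerAr.
- move=> z /E2 /h3 [s [hs hz]].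
  exists (map (fun ab => (a^-1 *: ab.1, a^-1 *: ab.2)) s); split.
    move=> ab' /mapP [ab abs ->] /=; have [hab1 hab2] := hs ab abs.
    by split; apply/E1; rewrite scalerA divff // scale1r.
  apply: (scalerI a20); rewrite hz big_map scaler_sumr; apply: eq_bigr => ab _.
  by rewrite gaa scalerA exprVn divff // scale1r.
Qed.
Lemma main_sec (i : nat) (g : L -> L -> L) (hg : alt_bilinear g)
  (hgi : restr_in_Hhat Zp theta i g) (j : nat) (hij : j = i %[mod p.-1]) :
  restr_in_Hhat Zp theta j g.
Proof.
have ci0 : c^-1 != 0 by rewrite invr_eq0 c_neq0.
case: (leqP i j) => hle.
  have dv : (p.-1 %| j - i)%N by rewrite -eqn_mod_dvd //; apply/eqP.
  set m := ((j - i) %/ p.-1)%N.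
  have hj : j = (i + m * p.-1)%N by rewrite divnK // subnKC.
  apply: (transfer (a := c^-1 ^+ m)) hg hgi; first exact: expf_neq0.
    by move=> x; rewrite hj; apply: ideal_shift.
  move=> z; have -> : (2 * j + 1 = (2 * i + 1) + (2 * m) * p.-1)%N.
    by rewrite hj mulnDr addnAC mulnA.
  by rewrite ideal_shift -exprM (mulnC m 2).
have dv : (p.-1 %| i - j)%N by rewrite -eqn_mod_dvd ?(ltnW hle) //; apply/eqP; rewrite hij.
set m := ((i - j) %/ p.-1)%N.
have hi : i = (j + m * p.-1)%N by rewrite divnK // subnKC // ltnW.
have hc : forall n (x : L), c^-1 ^+ n *: (c ^+ n *: x) = x.
  by move=> n x; rewrite scalerA -exprMn mulVf ?c_neq0 // expr1n scale1r.
apply: (transfer (a := c ^+ m)) hg hgi; first by rewrite expf_neq0 // c_neq0.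
  by move=> x; rewrite hi ideal_shift hc.
move=> z; have -> : (2 * i + 1 = (2 * j + 1) + (2 * m) * p.-1)%N.
  by rewrite hi mulnDr addnAC mulnA.
  by rewrite ideal_shift -exprM (mulnC m 2) hc.
Qed.
End Main.

Unset Implicit Arguments.
Theorem lemma2p2 (p : nat) (F : fieldType) (Zp : {pred F})
  (L : fieldExtType F) (theta : L)
  (p_prime : prime p) (p_odd : odd p)
  (hZp : is_padic_integers p Zp)
  (htheta : p.-primitive_root theta)
  (hK : <<1%VS; theta>>%VS = fullv)
  (i : nat) (g : L -> L -> L)
  (hg : alt_bilinear g)
  (hgi : restr_in_Hhat Zp theta i g)
  (j : nat) (hij : j = i %[mod p.-1]) :
  restr_in_Hhat Zp theta j g.
Proof. exact: (main_sec p_prime hZp htheta hK hg hgi hij). Qed.
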